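(* Let $G=(\mathcal{V},\mathcal{E})$, the corrupt set $\mathcal{V}_c$, and the other graph notation be as in the context, and assume every honest node has at least one corrupt neighbour. Let $p$ be an integer larger than any possible value of $\sum_{j\in\mathcal{V}}S_j$, and let the private data $S_1,\dots,S_n$ be mutually independent random variables with values in $\{0,\dots,p-1\}$. For every ordered pair $(i,j)$ with $j\in\mathcal{N}_i$ let $R_i^j$ be uniform on $\mathbb{Z}_p$, all these mutually independent and independent of $(S_1,\dots,S_n)$; set $R_i^i=S_i-\sum_{j\in\mathcal{N}_i}R_i^j\bmod p$ and $$S_i'=R_i^i+\textstyle\sum_{j\in\mathcal{N}_i}R_j^i \bmod p\ \in\{0,\dots,p-1\}.$$ Run the following iteration with inputs $S_i'$ (viewed as real numbers), constants $c>0$, $\theta\in[0,1)$, and initialization $z_{i|j}^{(0)}=0$: for $t\ge 0$, $$x_i^{(t+1)}=\frac{S_i'-\sum_{j\in\mathcal{N}_i}B_{i|j}z_{i|j}^{(t)}}{1+c\,d_i},\qquad z_{j|i}^{(t+1)}=\theta z_{j|i}^{(t)}+(1-\theta)\big(z_{i|j}^{(t)}+2cB_{i|j}x_i^{(t+1)}\big)\ \ (j\in\mathcal{N}_i).$$ Let the adversary's view be $\mathcal{O}=\{S_j\}_{j\in\mathcal{V}_c}\cup\{R_j^k,R_k^j\}_{\{j,k\}\in\mathcal{E}_c}\cup\{X^{(t)}\}_{t\ge1}$, where $X^{(t)}=(x_1^{(t)},\dots,x_n^{(t)})$. Then for every honest node $i\in\mathcal{V}_h$, $$\mathrm{I}(S_i;\mathcal{O})=\mathrm{I}\Big(S_i;\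 \textstyle\sum_{j\in\mathcal{V}_{h,1}}S_j\Big).$$
   Context: $G=(\mathcal{V},\mathcal{E})$ is a connected undirected graph, $\mathcal{V}=\{1,\dots,n\}$, $\mathcal{N}_i$ the neighbours of $i$, $d_i=|\mathcal{N}_i|$. For an edge $\{i,j\}$ with $i<j$: $B_{i|j}=1$, $B_{j|i}=-1$. $\mathcal{V}_c\subseteq\mathcal{V}$ is the set of corrupt nodes, $\mathcal{V}_h=\mathcal{V}\setminus\mathcal{V}_c$ the honest nodes, $\mathcal{E}_h$ the edges with both endpoints honest, $\mathcal{E}_c=\mathcal{E}\setminus\mathcal{E}_h$, $G_h=(\mathcal{V}_h,\mathcal{E}_h)$, and $\mathcal{V}_{h,1}$ is the vertex set of the connected component of $G_h$ containing the considered honest node $i$. $\mathrm{I}$ denotes mutual information. *)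

(* Defs.v *)
From HB Require Import structures.
From mathcomp Require Import all_boot all_order all_algebra.
From mathcomp Require Import intdiv boolp reals exp.
Set Implicit Arguments. Unset Strict Implicit. Unset Printing Implicit Defensive.
Import Order.TTheory GRing.Theory Num.Theory.
Local Open Scope ring_scope.

Section Defs.
Variable R : realType.

Definition is_pmf (T : finType) (P : T -> R) :=
  (forall w, 0 <= P w) /\ \sum_(w : T) P w = 1.

Definition Pr (T : finType) (P : T -> R) (A : T -> Prop) : R :=
  \sum_(w : T) (if `[< A w >] then P w else 0).

(* mutual information (in nats) of two discrete random variables X, Y on a
   finite probability space, with values in arbitrary types:
   I(X;Y) = E[ ln (P(X=x,Y=y) / (P(X=x) P(Y=y))) ] *)
Definition MI (T : finType) (P : T -> R) (A B : Type) (X : T -> A) (Y : T -> B) : R :=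
  \sum_(w : T) P w *
    ln (Pr P (fun v => X v = X w /\ Y v = Y w) /
        (Pr P (fun v => X v = X w) * Pr P (fun v => Y v = Y w))).

Definition Bsgn (n : nat) (i j : 'I_n) : R := if (i < j)%N then 1 else -1.

Definition degree (n : nat) (adj : rel 'I_n) (i : 'I_n) : nat := #|[pred j | adj i j]|.

Definition adj_honest (n : nat) (adj : rel 'I_n) (Vc : {set 'I_n}) : rel 'I_n :=
  [rel u v | [&& adj u v, u \notin Vc & v \notin Vc]].

Definition honest_component (n : nat) (adj : rel 'I_n) (Vc : {set 'I_n}) (i : 'I_n)
  : {set 'I_n} := [set j | connect (adj_honest adj Vc) i j].

Definition Rself (n p : nat) (adj : rel 'I_n) (s : 'I_n -> nat) (r : 'I_n -> 'I_n -> nat)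
  (i : 'I_n) : int :=
  (((s i)%:Z - \sum_(j | adj i j) (r i j)%:Z) %% (p%:Z))%Z.

Definition Sshare (n p : nat) (adj : rel 'I_n) (s : 'I_n -> nat) (r : 'I_n -> 'I_n -> nat)
  (i : 'I_n) : int :=
  ((Rself p adj s r i + \sum_(j | adj i j) (r j i)%:Z) %% (p%:Z))%Z.

(* x-update given inputs s and current z (z i j = z_{i|j}) *)
Definition xupd (n : nat) (adj : rel 'I_n) (c : R) (s : 'I_n -> R)
  (z : 'I_n -> 'I_n -> R) (i : 'I_n) : R :=
  (s i - \sum_(j | adj i j) Bsgn i j * z i j) / (1 + c * (degree adj i)%:R).

(* zseq t = z^(t); z^(0) = 0; entries off the edges are irrelevant (kept 0) *)
Fixpoint zseq (n : nat) (adj : rel 'I_n) (c theta : R) (s : 'I_n -> R) (t : nat)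
  : 'I_n -> 'I_n -> R :=
  match t with
  | 0 => fun _ _ => 0
  | t'.+1 =>
      let z := zseq adj c theta s t' in
      fun j i => if adj i j then
                   theta * z j i + (1 - theta) * (z i j + 2 * c * Bsgn i j * xupd adj c s z i)
                 else 0
  end.

(* xseq t = X^(t+1) *)
Definition xseq (n : nat) (adj : rel 'I_n) (c theta : R) (s : 'I_n -> R) (t : nat)
  : 'I_n -> R := xupd adj c s (zseq adj c theta s t).

End Defs.

(* Main.v *)
Require Import Defs.
From HB Require Import structures.
From mathcomp Require Import all_boot all_order all_algebra.
From mathcomp Require Import intdiv boolp reals exp.
From mathcomp Require Import ring.
Import Order.TTheory GRing.Theory Num.Theory.
Local Open Scope ring_scope.
Set Implicit Arguments. Unset Strict Implicit. Unset Printing Implicit Defensive.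

Section Arith.
Variable p' : nat.
Local Notation Zq := 'I_p'.+1.

Definition rep (a : Zq) (e : int) := (val a)%:Z = (e %% (p'.+1)%:Z)%Z.

Lemma rep_val (a : Zq) : rep a (val a)%:Z.
Proof. by rewrite /rep modz_nat modn_small ?ltn_ord. Qed.

Lemma rep_add a b e f : rep a e -> rep b f -> rep (a + b) (e + f).
Proof.
rewrite /rep => ha hb.
have -> : (val (a + b))%:Z = (((val a + val b)%N)%:Z %% (p'.+1)%:Z)%Z by rewrite modz_nat.
by rewrite PoszD ha hb modzDml modzDmr.
Qed.

Lemma rep_opp a e : rep a e -> rep (- a) (- e).
Proof.
rewrite /rep => ha.
have -> : (val (- a))%:Z = (((p'.+1 - val a)%N)%:Z %% (p'.+1)%:Z)%Z by rewrite modz_nat.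
rewrite -subzn; last by apply: ltnW; exact: ltn_ord.
by rewrite modzDl ha modzNm.
Qed.

Lemma rep_sub a b e f : rep a e -> rep b f -> rep (a - b) (e - f).
Proof. by move=> ha hb; apply: rep_add => //; apply: rep_opp. Qed.

Lemma rep_sum (I : finType) (Q : pred I) (F : I -> Zq) (G : I -> int) :
  (forall j, Q j -> rep (F j) (G j)) -> rep (\sum_(j | Q j) F j) (\sum_(j | Q j) G j).
Proof.
move=> h; elim/big_rec2: _ => [|j a e Qj he]; first by rewrite /rep mod0z.
exact: rep_add (h _ Qj) he.
Qed.

Lemma val_sum (I : finType) (Q : pred I) (F : I -> Zq) :
  val (\sum_(j | Q j) F j) = ((\sum_(j | Q j) val (F j)) %% p'.+1)%N.
Proof.
have := rep_sum (fun j _ => rep_val (F j)) (Q := Q).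
rewrite /rep -(big_morph (fun m : nat => m%:Z) PoszD (erefl 0%:Z)) modz_nat.
by move=> [].
Qed.

Lemma zid1 (V : zmodType) (x a b o i : V) : x - a + b - (o - a) + (i - b) = x - o + i.
Proof.
rewrite opprB [x - a + b]addrAC -[x + b - a + (a - o)]addrA addKr.
by rewrite [x + b - o]addrAC -[x - o + b + _]addrA [b + (i - b)]addrC subrK.
Qed.
Lemma zid2 (V : zmodType) (x i bo bi : V) : x - (i + bo) + (i + bi) = x - bo + bi.
Proof.
rewrite opprD addrA; congr (_ + _); by rewrite [- i - bo]addrC addrA subrK.
Qed.
End Arith.

Section Main.
Variables (R : realType) (n : nat) (adj : rel 'I_n) (Vc : {set 'I_n}) (p' : nat) (c theta : R).
Hypothesis adj_sym : symmetric adj.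
Hypothesis c_gt0 : 0 < c.
Local Notation Zq := 'I_p'.+1.

Definition shz (x : 'I_n -> Zq) (r : 'I_n -> 'I_n -> Zq) (l : 'I_n) : Zq :=
  x l - \sum_(j | adj l j) r l j + \sum_(j | adj l j) r j l.

Lemma Sshare_sh x r l : Sshare p'.+1 adj (fun j => val (x j)) (fun j k => val (r j k)) l
   = (val (shz x r l))%:Z.
Proof.
rewrite /Sshare /Rself.
have h : rep (shz x r l) ((val (x l))%:Z - \sum_(j | adj l j) (val (r l j))%:Z
                          + \sum_(j | adj l j) (val (r j l))%:Z).
  apply: rep_add; first apply: rep_sub; first exact: rep_val.
  - by apply: rep_sum => j _; apply: rep_val.
  - by apply: rep_sum => j _; apply: rep_val.
by rewrite h modzDml.
Qed.

Definition spv (x : 'I_n -> Zq) (r : 'I_n -> 'I_n -> Zq) : 'I_n -> R :=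
  fun l => (Sshare p'.+1 adj (fun j => val (x j)) (fun j k => val (r j k)) l)%:~R.

Definition Phi (x : 'I_n -> Zq) (r : 'I_n -> 'I_n -> Zq) :=
  ((fun j : 'I_n => if j \in Vc then Some (x j) else None,
    fun j k : 'I_n => if adj j k && ((j \in Vc) || (k \in Vc)) then Some (r j k) else None),
   fun t : nat => xseq adj c theta (spv x r) t).

Lemma Phi_sh x r y r' : (forall j, j \in Vc -> x j = y j) ->
  (forall j k, adj j k -> (j \in Vc) || (k \in Vc) -> r j k = r' j k) ->
  (forall l, shz x r l = shz y r' l) -> Phi x r = Phi y r'.
Proof.
move=> h1 h2 h3; rewrite /Phi.
have -> : spv x r = spv y r'.
  by apply: funext => l; rewrite /spv !Sshare_sh h3.
congr (_, _, _).
- by apply: funext => j; case: ifP => // /h1 ->.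
- apply: funext => j; apply: funext => k.
  by case: ifP => // /andP[a b]; rewrite h2.
Qed.

Lemma Phi_compat x r r' : (forall i j, adj i j -> r i j = r' i j) -> Phi x r = Phi x r'.
Proof.
move=> h; apply: Phi_sh => //.
- by move=> j k a _; apply: h.
- move=> l; rewrite /shz; congr (_ - _ + _).
  + by apply: eq_bigr => j a; apply: h.
  + by apply: eq_bigr => j a; apply: h; rewrite adj_sym.
Qed.

Lemma xseq0 (s : 'I_n -> R) l :
  xseq adj c theta s 0 l = s l / (1 + c * (degree adj l)%:R).
Proof. by rewrite /xseq /xupd /= big1 ?subr0 // => j _; rewrite mulr0. Qed.

Lemma Phi_inv x r y r' : Phi x r = Phi y r' ->
  (forall j k, adj j k -> (j \in Vc) || (k \in Vc) -> r j k = r' j k) /\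
  (forall l, shz x r l = shz y r' l).
Proof.
case=> _ h2 h3; split.
- move=> j k a b; have := congr1 (fun f => f j k) h2; rewrite /= a b /=.
  by case.
- move=> l; have := congr1 (fun f => f 0%N l) h3; rewrite /= !xseq0.
  have d0 : 1 + c * (degree adj l)%:R != 0.
    by rewrite gt_eqF // ltr_pwDl // mulr_ge0 // ltW.
  move/(congr1 (fun z => z * (1 + c * (degree adj l)%:R))).
  rewrite !divfK // /spv !Sshare_sh => /eqP; rewrite eqr_int => /eqP [] hv.
  exact: val_inj.
Qed.

End Main.

Section Graph.
Variables (n : nat) (adj : rel 'I_n) (Vc : {set 'I_n}) (p' : nat).
Hypothesis adj_sym : symmetric adj.
Hypothesis adj_irr : irreflexive adj.
Local Notation Zq := 'I_p'.+1.
Local Notation sh := (shz adj).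

Lemma sum_sh (A : {set 'I_n}) (x : 'I_n -> Zq) (r : 'I_n -> 'I_n -> Zq) : \sum_(l in A) sh x r l =
  \sum_(l in A) x l - \sum_(l in A) \sum_(j | adj l j && (j \notin A)) r l j
                    + \sum_(l in A) \sum_(j | adj l j && (j \notin A)) r j l.
Proof.
rewrite /shz big_split /= sumrB.
have hs : forall F : 'I_n -> 'I_n -> Zq, \sum_(l in A) \sum_(j | adj l j) F l j =
   \sum_(l in A) \sum_(j | adj l j && (j \in A)) F l j +
   \sum_(l in A) \sum_(j | adj l j && (j \notin A)) F l j.
  by move=> F; rewrite -big_split /=; apply: eq_bigr => l _; rewrite (bigID (fun j => j \in A)).
rewrite (hs (fun l j => r l j)) (hs (fun l j => r j l)).
have -> : \sum_(l in A) \sum_(j | adj l j && (j \in A)) r j l =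
          \sum_(l in A) \sum_(j | adj l j && (j \in A)) r l j.
  rewrite (exchange_big_dep (fun j => j \in A)) /=; last by move=> ? ? _ /andP[].
  apply: eq_bigr => j jA; apply: eq_bigl => l.
  by rewrite adj_sym jA andbT andbC.
exact: zid2.
Qed.

Definition Etype := {ij : 'I_n * 'I_n | adj ij.1 ij.2}.

Definition ext (r : {ffun Etype -> Zq}) (i j : 'I_n) : Zq :=
  match (insub (i, j) : option Etype) with Some e => r e | None => 0 end.

Lemma ext_adj r i j (h : adj i j) : ext r i j = r (Sub (i, j) h).
Proof. by rewrite /ext insubT. Qed.

Lemma ext_nadj r i j : ~~ adj i j -> ext r i j = 0.
Proof. by move=> h; rewrite /ext insubF //; apply: negbTE. Qed.

Definition corrupt (e : Etype) := ((val e).1 \in Vc) || ((val e).2 \in Vc).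

Definition Eqv (x y : 'I_n -> Zq) :=
  (forall j, j \in Vc -> x j = y j) /\
  exists tau : {ffun Etype -> Zq} -> {ffun Etype -> Zq}, injective tau /\
    forall r, (forall e, corrupt e -> tau r e = r e) /\
              (forall l, sh x (ext r) l = sh y (ext (tau r)) l).

Lemma Eqv_refl x y : x =1 y -> Eqv x y.
Proof.
move=> h; split; first by move=> j _; apply: h.
by exists id; split => // r; split => // l; rewrite /shz h.
Qed.

Lemma Eqv_trans x y z : Eqv x y -> Eqv y z -> Eqv x z.
Proof.
move=> [h1 [t1 [i1 h1']]] [h2 [t2 [i2 h2']]]; split.
  by move=> j jV; rewrite h1 // h2.
exists (t2 \o t1); split; first exact: inj_comp.
move=> r; have [a b] := h1' r; have [a' b'] := h2' (t1 r); split.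
  by move=> e ce; rewrite /= a' // a.
by move=> l; rewrite b b'.
Qed.

Lemma Eqv_eqr x y z : Eqv x y -> y =1 z -> Eqv x z.
Proof. by move=> h e; apply: Eqv_trans h (Eqv_refl e). Qed.

Definition move (x : 'I_n -> Zq) (u v : 'I_n) (k : Zq) : 'I_n -> Zq :=
  fun l => x l - (if l == u then k else 0) + (if l == v then k else 0).

Lemma sum_pred1 (Q : pred 'I_n) (u : 'I_n) (k : Zq) : Q u ->
  \sum_(l | Q l) (if l == u then k else 0) = k.
Proof.
move=> Qu; rewrite (bigD1 u) //= eqxx big1 ?addr0 // => j /andP[_ /negbTE->] //.
Qed.

Lemma sum_move (A : {set 'I_n}) x u v k : u \in A -> v \in A ->
  \sum_(l in A) move x u v k l = \sum_(l in A) x l.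
Proof.
move=> uA vA; rewrite /move big_split sumrB /= !sum_pred1 //.
by rewrite subrK.
Qed.

Lemma Eqv_move_step x u v k : adj_honest adj Vc u v -> Eqv x (move x u v k).
Proof.
move=> /and3P[auv uV vV].
split.
  move=> j jV; rewrite /move.
  have -> : (j == u) = false by apply: contraNF uV => /eqP <-.
  have -> : (j == v) = false by apply: contraNF vV => /eqP <-.
  by rewrite subr0 addr0.
pose tau (r : {ffun Etype -> Zq}) : {ffun Etype -> Zq} :=
  [ffun e => if val e == (u, v) then r e - k else r e].
exists tau; split.
  move=> r1 r2 /ffunP h; apply/ffunP => e; have := h e; rewrite !ffunE.
  by case: ifP => // _ /addIr.
move=> r; split.
  move=> e; rewrite /corrupt ffunE; case: ifP => // /eqP -> /=.
  by rewrite (negbTE uV) (negbTE vV).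
have hext : forall i j, ext (tau r) i j = ext r i j - (if (i == u) && (j == v) then k else 0).
  move=> i j; case: (boolP (adj i j)) => aij.
    by rewrite !ext_adj ffunE SubK xpair_eqE; case: ifP => // _; rewrite subr0.
  rewrite !ext_nadj //; case: ifP => [/andP[/eqP iu /eqP jv]|_]; last by rewrite subr0.
  by move: aij; rewrite iu jv auv.
move=> l.
have e1 : \sum_(j | adj l j) ext (tau r) l j =
          \sum_(j | adj l j) ext r l j - (if l == u then k else 0).
  rewrite (eq_bigr _ (fun j _ => hext l j)) sumrB; congr (_ - _).
  case: (eqVneq l u) => [->|_] /=; first exact: sum_pred1.
  by rewrite big1.
have e2 : \sum_(j | adj l j) ext (tau r) j l =
          \sum_(j | adj l j) ext r j l - (if l == v then k else 0).
  rewrite (eq_bigr _ (fun j _ => hext j l)) sumrB; congr (_ - _).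
  case: (eqVneq l v) => [->|_] /=; last by rewrite big1 // => j _; rewrite andbF.
  rewrite (eq_bigr (fun j => if j == u then k else 0)); last by move=> j _; rewrite andbT.
  by apply: sum_pred1; rewrite adj_sym.
rewrite /shz e1 e2.
by rewrite /move zid1.
Qed.

Lemma Eqv_move_conn u l : connect (adj_honest adj Vc) u l -> forall x k, Eqv x (move x u l k).
Proof.
move/connectP=> [ps pth ->]; elim: ps u pth => [|m ps IH] u /= pth x k.
  by apply: Eqv_refl => j; rewrite /move subrK.
move/andP: pth => [hum pth].
apply: Eqv_trans (Eqv_move_step x k hum) _.
apply: Eqv_eqr (IH m pth (move x u m k) k) _.
by move=> j; rewrite /move addrK.
Qed.

End Graph.

Section Comp.
Variables (n : nat) (adj : rel 'I_n) (Vc : {set 'I_n}) (p' : nat).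
Hypothesis adj_sym : symmetric adj.
Hypothesis adj_irr : irreflexive adj.
Variables (i : 'I_n).
Hypothesis hi : i \notin Vc.
Local Notation Zq := 'I_p'.+1.
Local Notation H := (honest_component adj Vc i).
Local Notation Eqv := (Eqv adj Vc (p' := p')).

Lemma H_hon l : l \in H -> l \notin Vc.
Proof.
rewrite inE => con.
have cl : closed (adj_honest adj Vc) [pred v | v \notin Vc].
  by move=> x y /and3P[_ hx hy]; rewrite !inE hx hy.
by have := closed_connect cl con; rewrite !inE hi => <-.
Qed.

Lemma H_cl l j : l \in H -> adj l j -> j \notin H -> j \in Vc.
Proof.
move=> lH alj; apply: contraNT => jV; rewrite inE.
apply: (connect_trans (y := l)); first by move: lH; rewrite inE.
by apply: connect1; rewrite /adj_honest /= alj (H_hon lH) jV.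
Qed.

Lemma iH : i \in H.
Proof. by rewrite inE connect0. Qed.

Lemma transport0 (x y : 'I_n -> Zq) : (forall l, l != i -> x l = y l) ->
  \sum_(l in H) x l = \sum_(l in H) y l -> Eqv x y.
Proof.
move=> h hs; apply: Eqv_refl => l; case: (eqVneq l i) => [->|]; last exact: h.
move: hs; rewrite (bigD1 i iH) [X in _ = X](bigD1 i iH) /=.
rewrite (eq_bigr (fun l => y l)); last by move=> j /andP[_ ji]; apply: h.
exact: addIr.
Qed.

Lemma transport (y : 'I_n -> Zq) (m : nat) : forall x : 'I_n -> Zq,
  (#|[pred l | (l \in H) && (l != i) && (x l != y l)]| <= m)%N ->
  (forall l, l \notin H -> x l = y l) ->
  \sum_(l in H) x l = \sum_(l in H) y l -> Eqv x y.
Proof.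
elim: m => [|m IH] x hc hoff hsum.
  apply: transport0 => // l li; case: (boolP (l \in H)) => lH; last exact: hoff.
  move: hc; rewrite leqn0 => /eqP/card0_eq/(_ l); rewrite -!topredE /= lH li /=.
  by move/negbT; rewrite negbK => /eqP.
case: (boolP [exists l, (l \in H) && (l != i) && (x l != y l)]); last first.
  move/existsPn => h; apply: transport0 => // l li.
  case: (boolP (l \in H)) => lH; last exact: hoff.
  by have := h l; rewrite lH li /= negbK => /eqP.
move/existsP => [l0 /andP[/andP[l0H l0i] xy0]].
pose k := y l0 - x l0.
have e1 : Eqv x (move x i l0 k).
  by apply: Eqv_move_conn => //; move: l0H; rewrite inE.
apply: Eqv_trans e1 _; apply: IH.
- rewrite -ltnS; apply: leq_trans hc.
  rewrite [X in (_ < X)%N](cardD1 l0) inE l0H l0i xy0 /= add1n ltnS.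
  apply: subset_leq_card; apply/subsetP => l; rewrite !inE => /andP[/andP[lH li] hl].
  rewrite lH li /=.
  have nl0 : l != l0.
    apply: contraNneq hl => ->; rewrite /move (negbTE l0i) eqxx subr0 /k.
    by rewrite addrC subrK.
  rewrite nl0 /=; move: hl; rewrite /move (negbTE li) (negbTE nl0) subr0 addr0.
  by [].
- move=> l lH; rewrite /move.
  have -> : (l == i) = false by apply: contraNF lH => /eqP ->; exact: iH.
  have -> : (l == l0) = false by apply: contraNF lH => /eqP ->.
  by rewrite subr0 addr0 hoff.
- by rewrite sum_move // iH.
Qed.

End Comp.

Section Prob.
Variables (R : realType) (n : nat) (adj : rel 'I_n) (Vc : {set 'I_n}) (p' : nat)
  (c theta : R) (T : finType) (P : T -> R)
  (S : 'I_n -> T -> 'I_p'.+1) (Rr : 'I_n -> 'I_n -> T -> 'I_p'.+1).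
Hypothesis adj_sym : symmetric adj.
Hypothesis Ppmf : is_pmf P.
Hypothesis Pbound : forall w, 0 < P w -> (\sum_(j < n) val (S j w) < p'.+1)%N.
Hypothesis Pindep : forall (s : 'I_n -> 'I_p'.+1) (r : 'I_n -> 'I_n -> 'I_p'.+1),
      Pr P (fun w => (forall i, S i w = s i) /\
                     (forall i j, adj i j -> Rr i j w = r i j))
      = (\prod_(i < n) Pr P (fun w => S i w = s i)) *
        ((p'.+1)%:R^-1) ^+ #|[pred ij : 'I_n * 'I_n | adj ij.1 ij.2]|.
Hypothesis c_gt0 : 0 < c.
Variable i : 'I_n.
Hypothesis hi : i \notin Vc.
Local Notation Zq := 'I_p'.+1.
Local Notation Et := (Etype adj).
Local Notation H := (honest_component adj Vc i).
Local Notation Phi := (Phi adj Vc c theta).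

Definition ind (b : Prop) : R := if `[< b >] then 1 else 0.
Definition pi (s : 'I_n -> Zq) : R := \prod_(j < n) Pr P (fun w => S j w = s j).
Definition Kc : R := ((p'.+1)%:R^-1) ^+ #|[pred ij : 'I_n * 'I_n | adj ij.1 ij.2]|.
Definition Ow w := Phi (fun j => S j w) (fun j k => Rr j k w).
Definition sg (s : 'I_n -> Zq) := (\sum_(j in H) val (s j))%N.
Definition Nn o (s : 'I_n -> Zq) := \sum_(r : {ffun Et -> Zq}) ind (Phi s (ext r) = o).

Lemma ind_ge0 b : 0 <= ind b.
Proof. by rewrite /ind; case: ifP. Qed.

Lemma ind_and a b : ind (a /\ b) = ind a * ind b.
Proof. by rewrite /ind asbool_and; case: `[< a >]; case: `[< b >]; rewrite ?mulr1 ?mulr0. Qed.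

Lemma Pr_ind A : Pr P A = \sum_w ind (A w) * P w.
Proof. by apply: eq_bigr => w _; rewrite /ind; case: ifP; rewrite ?mul1r ?mul0r. Qed.

Lemma Pr_ge0 A : 0 <= Pr P A.
Proof. by apply: sumr_ge0 => w _; case: ifP => // _; apply: Ppmf.1. Qed.

Lemma Pr_ge A w : A w -> P w <= Pr P A.
Proof.
move=> Aw; rewrite /Pr (bigD1 w) //= asboolT // lerDl.
by apply: sumr_ge0 => v _; case: ifP => // _; apply: Ppmf.1.
Qed.

Lemma Pr_pos A : 0 < Pr P A -> exists w, A w /\ 0 < P w.
Proof.
move=> h; apply: contrapT => hn.
suff : Pr P A = 0 by move=> e; move: h; rewrite e ltxx.
apply: big1 => w _; case: asboolP => // Aw.
have := Ppmf.1 w; rewrite le_eqVlt => /orP[/eqP <- //|pw].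
by exfalso; apply: hn; exists w.
Qed.

Lemma pi_ge0 s : 0 <= pi s.
Proof. by apply: prodr_ge0 => j _; apply: Pr_ge0. Qed.

Lemma Kc_gt0 : 0 < Kc.
Proof. by rewrite /Kc exprn_gt0 // invr_gt0 ltr0n. Qed.

Lemma pi_bound (x : 'I_n -> Zq) : 0 < pi x -> (\sum_(j < n) val (x j) < p'.+1)%N.
Proof.
move=> hp.
have : 0 < Pr P (fun w => (forall i, S i w = x i) /\
                          (forall i j, adj i j -> Rr i j w = x i)).
  by rewrite Pindep; apply: mulr_gt0 hp Kc_gt0.
case/Pr_pos => w [[hs _] pw]; have := Pbound pw.
by rewrite (eq_bigr (fun j => val (x j))) // => j _; rewrite hs.
Qed.

Lemma sg_le (x : 'I_n -> Zq) : (sg x <= \sum_(j < n) val (x j))%N.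
Proof. by rewrite [X in (_ <= X)%N](bigID (fun j => j \in H)) /= leq_addr. Qed.

Lemma supp w0 (x : 'I_n -> Zq) : 0 < P w0 -> 0 < pi x -> Nn (Ow w0) x != 0 ->
  sg x = sg (fun j => S j w0).
Proof.
move=> pw0 px hN.
have [r hr] : exists r : {ffun Et -> Zq}, Phi x (ext r) = Ow w0.
  apply: contrapT => hn; move: hN; rewrite /Nn big1 ?eqxx // => r _.
  by rewrite /ind asboolF // => h; apply: hn; exists r.
have [hc hs] := Phi_inv c_gt0 hr.
have hz : \sum_(l in H) x l = \sum_(l in H) S l w0.
  have e := sum_sh adj_sym H x (ext r).
  have e' := sum_sh adj_sym H (fun j => S j w0) (fun j k => Rr j k w0).
  have ee : \sum_(l in H) shz adj x (ext r) l =
            \sum_(l in H) shz adj (fun j => S j w0) (fun j k => Rr j k w0) l.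
    by apply: eq_bigr => l _; apply: hs.
  rewrite e e' in ee.
  have b1 : \sum_(l in H) \sum_(j | adj l j && (j \notin H)) ext r l j =
            \sum_(l in H) \sum_(j | adj l j && (j \notin H)) Rr l j w0.
    apply: eq_bigr => l lH; apply: eq_bigr => j /andP[alj jH].
    by apply: hc => //; rewrite (H_cl hi lH alj jH) orbT.
  have b2 : \sum_(l in H) \sum_(j | adj l j && (j \notin H)) ext r j l =
            \sum_(l in H) \sum_(j | adj l j && (j \notin H)) Rr j l w0.
    apply: eq_bigr => l lH; apply: eq_bigr => j /andP[alj jH].
    by apply: hc; [rewrite adj_sym | rewrite (H_cl hi lH alj jH)].
  by move: ee; rewrite b1 b2 => /addIr /addIr.
have := congr1 val hz; rewrite !val_sum !modn_small //.
- by apply: leq_ltn_trans (sg_le _) (Pbound pw0).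
- by apply: leq_ltn_trans (sg_le _) (pi_bound px).
Qed.

Lemma Eqv_Phi (x y : 'I_n -> Zq) : Eqv adj Vc x y ->
  exists tau : {ffun Et -> Zq} -> {ffun Et -> Zq},
    injective tau /\ forall r, Phi x (ext r) = Phi y (ext (tau r)).
Proof.
move=> [h1 [tau [itau ht]]]; exists tau; split => // r.
have [hc hs] := ht r.
apply: Phi_sh => // j k ajk cjk.
by rewrite !(ext_adj _ ajk) hc // /corrupt SubK.
Qed.

Lemma inv o (x y : 'I_n -> Zq) : (forall l, l \notin H -> x l = y l) -> sg x = sg y ->
  Nn o x = Nn o y.
Proof.
move=> hoff hsg.
have hz : \sum_(l in H) x l = \sum_(l in H) y l.
  by apply: val_inj; rewrite !val_sum; move: hsg; rewrite /sg => ->.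
have hE := transport adj_sym (leqnn _) hoff hz.
have [tau [itau ht]] := Eqv_Phi hE.
rewrite /Nn [RHS](reindex_inj itau); apply: eq_bigr => r _.
by rewrite ht.
Qed.


Lemma conf_uniq w (G : {ffun 'I_n -> Zq} -> {ffun Et -> Zq} -> R) :
  \sum_(s : {ffun 'I_n -> Zq}) \sum_(r : {ffun Et -> Zq}) G s r *
     ind ((forall i, S i w = s i) /\ (forall i j, adj i j -> Rr i j w = ext r i j))
  = G [ffun j => S j w] [ffun e : Et => Rr (val e).1 (val e).2 w].
Proof.
set s0 := [ffun j => S j w]; set r0 := [ffun e : Et => Rr (val e).1 (val e).2 w].
rewrite (bigD1 s0) //= (bigD1 r0) //=.
rewrite {1}/ind asboolT; last first.
  split => [j|a b h]; first by rewrite /s0 ffunE.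
  by rewrite (ext_adj _ h) /r0 ffunE SubK.
rewrite mulr1 big1 ?addr0; last first.
  move=> r rr0; rewrite /ind asboolF ?mulr0 // => -[_ h].
  move/eqP: rr0; apply; apply/ffunP => -[[a b] hab].
  by rewrite /r0 ffunE /= (h a b hab) ext_adj.
rewrite big1 ?addr0 // => s ss0; apply: big1 => r _.
rewrite /ind asboolF ?mulr0 // => -[h _].
by move/eqP: ss0; apply; apply/ffunP => j; rewrite /s0 ffunE h.
Qed.

Lemma conf (F : ('I_n -> Zq) -> ('I_n -> 'I_n -> Zq) -> Prop) :
  (forall s r r', (forall i j, adj i j -> r i j = r' i j) -> F s r = F s r') ->
  Pr P (fun w => F (fun j => S j w) (fun j k => Rr j k w)) =
  Kc * \sum_(s : {ffun 'I_n -> Zq}) \sum_(r : {ffun Et -> Zq}) ind (F s (ext r)) * pi s.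
Proof.
move=> hF.
transitivity (\sum_(s : {ffun 'I_n -> Zq}) \sum_(r : {ffun Et -> Zq}) ind (F s (ext r)) *
   Pr P (fun w => (forall i, S i w = s i) /\ (forall i j, adj i j -> Rr i j w = ext r i j)));
  last first.
  rewrite mulr_sumr; apply: eq_bigr => s _; rewrite mulr_sumr; apply: eq_bigr => r _.
  by rewrite Pindep -/(pi s) -/Kc mulrA mulrC.
transitivity (\sum_w \sum_(s : {ffun 'I_n -> Zq}) \sum_(r : {ffun Et -> Zq})
   (ind (F s (ext r)) * P w) *
   ind ((forall i, S i w = s i) /\ (forall i j, adj i j -> Rr i j w = ext r i j))); last first.
  rewrite exchange_big /=; apply: eq_bigr => s _.
  rewrite exchange_big /=; apply: eq_bigr => r _.
  rewrite Pr_ind mulr_sumr; apply: eq_bigr => w _.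
  by rewrite mulrCA mulrC.
rewrite Pr_ind; apply: eq_bigr => w _; rewrite conf_uniq.
congr (ind _ * _).
have -> : (fun_of_fin [ffun j => S j w] : 'I_n -> Zq) = (fun j => S j w).
  by apply: funext => j; rewrite ffunE.
apply: esym; apply: hF => a b h.
by rewrite (ext_adj _ h) ffunE SubK.
Qed.


Definition mix (s t : {ffun 'I_n -> Zq}) : {ffun 'I_n -> Zq} :=
  [ffun j => if j \in H then s j else t j].

Lemma mixK s t : mix (mix s t) (mix t s) = s.
Proof. by apply/ffunP => j; rewrite !ffunE; case: (j \in H). Qed.

Lemma pi_split (x : 'I_n -> Zq) : pi x =
  (\prod_(j < n | j \in H) Pr P (fun w => S j w = x j)) *
  (\prod_(j < n | j \notin H) Pr P (fun w => S j w = x j)).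
Proof. by rewrite /pi (bigID (fun j => j \in H)). Qed.

Lemma pi_mix s t : pi (mix s t) * pi (mix t s) = pi s * pi t.
Proof.
rewrite !pi_split.
have e1 : forall u v, \prod_(j < n | j \in H) Pr P (fun w => S j w = mix u v j) =
                    \prod_(j < n | j \in H) Pr P (fun w => S j w = u j).
  by move=> u v; apply: eq_bigr => j jH; rewrite ffunE jH.
have e2 : forall u v, \prod_(j < n | j \notin H) Pr P (fun w => S j w = mix u v j) =
                    \prod_(j < n | j \notin H) Pr P (fun w => S j w = v j).
  by move=> u v; apply: eq_bigr => j jH; rewrite ffunE (negbTE jH).
rewrite !e1 !e2; ring.
Qed.

Lemma sg_mix s t : sg (mix s t) = sg s.
Proof. by apply: eq_bigr => j jH; rewrite ffunE jH. Qed.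

Lemma Mconst (x : R) : \sum_(r : {ffun Et -> Zq}) x = x * \sum_(r : {ffun Et -> Zq}) 1.
Proof. by rewrite mulr_sumr; apply: eq_bigr => r _; rewrite mulr1. Qed.

Section Fixed.
Variables (w0 : T) (a : Zq).
Hypothesis pw0 : 0 < P w0.
Local Notation o := (Ow w0).
Local Notation g := (sg (fun j => S j w0)).

Lemma Nn0 x : 0 < pi x -> sg x != g -> Nn o x = 0.
Proof.
move=> px hne; apply/eqP; apply: contraNT hne => hN; apply/eqP.
exact: supp pw0 px hN.
Qed.

Lemma term s t :
  ind (mix s t i = a) * Nn o (mix s t) * pi (mix s t) *
     (ind (sg (mix t s) = g) * pi (mix t s)) =
  ind (s i = a) * ind (sg s = g) * pi s * (Nn o t * pi t).
Proof.
rewrite ffunE (iH adj Vc i) sg_mix.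
transitivity (ind (s i = a) * (Nn o (mix s t) * ind (sg t = g)) *
              (pi (mix s t) * pi (mix t s))); first by ring.
rewrite pi_mix.
transitivity (ind (s i = a) * (ind (sg s = g) * Nn o t) * (pi s * pi t)); last by ring.
have [->|Q0] := eqVneq (pi s * pi t) 0; first by rewrite !mulr0.
congr (_ * _ * _).
have hp : forall u v : R, 0 <= u -> 0 <= v -> u * v != 0 -> 0 < u.
  move=> u v hu hv; rewrite lt_def hu andbT; apply: contraNneq => ->; by rewrite mul0r.
have ps : 0 < pi s by apply: hp (pi_ge0 _) (pi_ge0 _) Q0.
have pt : 0 < pi t by rewrite mulrC in Q0; apply: hp (pi_ge0 _) (pi_ge0 _) Q0.
have pm : 0 < pi (mix s t).
  by rewrite -pi_mix in Q0; apply: hp (pi_ge0 _) (pi_ge0 _) Q0.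
rewrite /ind; case: (eqVneq (sg t) g) => ht; case: (eqVneq (sg s) g) => hs.
- rewrite (asboolT ht) (asboolT hs) mulr1 mul1r; apply: inv.
    by move=> l lH; rewrite ffunE (negbTE lH).
  by rewrite sg_mix hs ht.
- have ns : ~ (sg s = g) by apply/eqP.
  rewrite (asboolT ht) (asboolF ns).
  by rewrite mulr1 mul0r; apply: Nn0 => //; rewrite sg_mix.
- have nt : ~ (sg t = g) by apply/eqP.
  rewrite (asboolT hs) (asboolF nt).
  by rewrite mulr0 mul1r Nn0.
- have ns : ~ (sg s = g) by apply/eqP.
  have nt : ~ (sg t = g) by apply/eqP.
  by rewrite (asboolF ns) (asboolF nt) mulr0 mul0r.
Qed.

Lemma core :
  \sum_(s : {ffun 'I_n -> Zq}) \sum_(t : {ffun 'I_n -> Zq})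
     ind (s i = a) * Nn o s * pi s * (ind (sg t = g) * pi t) =
  \sum_(s : {ffun 'I_n -> Zq}) \sum_(t : {ffun 'I_n -> Zq})
     ind (s i = a) * ind (sg s = g) * pi s * (Nn o t * pi t).
Proof.
rewrite !pair_bigA /=.
have hinj : injective (fun p : {ffun 'I_n -> Zq} * {ffun 'I_n -> Zq} =>
                          (mix p.1 p.2, mix p.2 p.1)).
  apply: (can_inj (g := fun p : {ffun 'I_n -> Zq} * {ffun 'I_n -> Zq} =>
                          (mix p.1 p.2, mix p.2 p.1))).
  by move=> [s t] /=; rewrite !mixK.
rewrite [LHS](reindex_inj hinj) /=; apply: eq_bigr => -[s t] _ /=.
exact: term.
Qed.

Lemma key :
  Pr P (fun v => S i v = a /\ Ow v = o) * Pr P (fun v => sg (fun j => S j v) = g) =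
  Pr P (fun v => S i v = a /\ sg (fun j => S j v) = g) * Pr P (fun v => Ow v = o).
Proof.
have hc1 : forall (Q : ('I_n -> Zq) -> Prop) (G : ('I_n -> Zq) -> ('I_n -> 'I_n -> Zq) -> Prop),
  (forall s r, G s r = (Q s /\ Phi s r = o)) ->
  forall s r r', (forall i j, adj i j -> r i j = r' i j) -> G s r = G s r'.
  by move=> Q G hG s r r' h; rewrite !hG (Phi_compat Vc c theta adj_sym s h).
have eA : Pr P (fun v => S i v = a /\ Ow v = o) =
   Kc * \sum_(s : {ffun 'I_n -> Zq}) ind (s i = a) * Nn o s * pi s.
  transitivity (Pr P (fun w => (fun (s : 'I_n -> Zq) r => s i = a /\ Phi s r = o)
                   (fun j => S j w) (fun j k => Rr j k w))); first by [].
  rewrite (@conf (fun (s : 'I_n -> Zq) r => s i = a /\ Phi s r = o));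
    last by apply: (hc1 (fun s => s i = a)).
  congr (_ * _); apply: eq_bigr => s _.
  rewrite /Nn mulr_sumr mulr_suml; apply: eq_bigr => r _.
  by rewrite ind_and.
have eB : Pr P (fun v => Ow v = o) =
   Kc * \sum_(s : {ffun 'I_n -> Zq}) Nn o s * pi s.
  transitivity (Pr P (fun w => (fun (s : 'I_n -> Zq) r => Phi s r = o)
                   (fun j => S j w) (fun j k => Rr j k w))); first by [].
  rewrite (@conf (fun (s : 'I_n -> Zq) r => Phi s r = o));
    last by move=> s r r' h; rewrite (Phi_compat Vc c theta adj_sym s h).
  congr (_ * _); apply: eq_bigr => s _.
  by rewrite /Nn mulr_suml.
have eC : Pr P (fun v => S i v = a /\ sg (fun j => S j v) = g) =
   Kc * \sum_(s : {ffun 'I_n -> Zq}) ind (s i = a) * ind (sg s = g) * pi s *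
          \sum_(r : {ffun Et -> Zq}) 1.
  transitivity (Pr P (fun w => (fun (s : 'I_n -> Zq) (r : 'I_n -> 'I_n -> Zq) =>
                   s i = a /\ sg s = g) (fun j => S j w) (fun j k => Rr j k w)));
    first by [].
  rewrite (@conf (fun (s : 'I_n -> Zq) (r : 'I_n -> 'I_n -> Zq) => s i = a /\ sg s = g)) //; congr (_ * _); apply: eq_bigr => s _.
  by rewrite Mconst ind_and.
have eD : Pr P (fun v => sg (fun j => S j v) = g) =
   Kc * \sum_(s : {ffun 'I_n -> Zq}) ind (sg s = g) * pi s * \sum_(r : {ffun Et -> Zq}) 1.
  transitivity (Pr P (fun w => (fun (s : 'I_n -> Zq) (r : 'I_n -> 'I_n -> Zq) =>
                   sg s = g) (fun j => S j w) (fun j k => Rr j k w)));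
    first by [].
  rewrite (@conf (fun (s : 'I_n -> Zq) (r : 'I_n -> 'I_n -> Zq) => sg s = g)) //; congr (_ * _); apply: eq_bigr => s _.
  by rewrite Mconst.
rewrite eA eB eC eD.
set M := \sum_(r : {ffun Et -> Zq}) (1 : R).
have l1 : (\sum_(s : {ffun 'I_n -> Zq}) ind (s i = a) * Nn o s * pi s) *
          (\sum_(s : {ffun 'I_n -> Zq}) ind (sg s = g) * pi s * M) =
  (\sum_(s : {ffun 'I_n -> Zq}) \sum_(t : {ffun 'I_n -> Zq})
     ind (s i = a) * Nn o s * pi s * (ind (sg t = g) * pi t)) * M.
  rewrite mulr_suml [RHS]mulr_suml; apply: eq_bigr => s _.
  rewrite mulr_sumr mulr_suml; apply: eq_bigr => t _; ring.
have l2 : (\sum_(s : {ffun 'I_n -> Zq}) ind (s i = a) * ind (sg s = g) * pi s * M) *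
          (\sum_(s : {ffun 'I_n -> Zq}) Nn o s * pi s) =
  (\sum_(s : {ffun 'I_n -> Zq}) \sum_(t : {ffun 'I_n -> Zq})
     ind (s i = a) * ind (sg s = g) * pi s * (Nn o t * pi t)) * M.
  rewrite mulr_suml [RHS]mulr_suml; apply: eq_bigr => s _.
  rewrite mulr_sumr mulr_suml; apply: eq_bigr => t _; ring.
transitivity (Kc * Kc * ((\sum_(s : {ffun 'I_n -> Zq}) ind (s i = a) * Nn o s * pi s) *
          (\sum_(s : {ffun 'I_n -> Zq}) ind (sg s = g) * pi s * M))); first by ring.
rewrite l1 core -l2; ring.
Qed.

End Fixed.

Lemma MI_eq : MI P (S i) Ow = MI P (S i) (fun w => sg (fun j => S j w)).
Proof.
rewrite /MI; apply: eq_bigr => w _.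
have := Ppmf.1 w; rewrite le_eqVlt => /orP[/eqP <-|pw]; first by rewrite !mul0r.
congr (_ * ln _).
have hk := key (S i w) pw.
set A := Pr P _ in hk; set D := Pr P _ in hk.
set C := Pr P _ in hk; set B := Pr P (fun v => Ow v = Ow w) in hk.
rewrite -/A -/B -/C -/D.
have hX : Pr P (fun v => S i v = S i w) != 0.
  by rewrite gt_eqF //; apply: lt_le_trans pw (Pr_ge _).
have hB : B != 0 by rewrite gt_eqF //; apply: lt_le_trans pw (Pr_ge _).
have hD : D != 0 by rewrite gt_eqF //; apply: lt_le_trans pw (Pr_ge _).
rewrite -[A](mulfK hD) hk; field.
by rewrite hX hB hD.
Qed.

End Prob.

Theorem theorem1 (R : realType) (n : nat) (adj : rel 'I_n) (Vc : {set 'I_n})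
  (p : nat) (c theta : R)
  (T : finType) (P : T -> R)
  (S : 'I_n -> T -> 'I_p) (Rr : 'I_n -> 'I_n -> T -> 'I_p) :
  (* G is a connected simple undirected graph *)
  symmetric adj -> irreflexive adj -> (forall u v, connect adj u v) ->
  (* every honest node has a corrupt neighbour *)
  (forall i, i \notin Vc -> exists2 j, adj i j & j \in Vc) ->
  (* probability space *)
  is_pmf P ->
  (* p exceeds every possible value of sum_j S_j *)
  (forall w, 0 < P w -> (\sum_(j < n) val (S j w) < p)%N) ->
  (* S_1..S_n mutually independent; the R_i^j (j in N_i) uniform on Z_p,
     mutually independent and independent of (S_1..S_n) *)
  (forall (s : 'I_n -> 'I_p) (r : 'I_n -> 'I_n -> 'I_p),
      Pr P (fun w => (forall i, S i w = s i) /\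
                     (forall i j, adj i j -> Rr i j w = r i j))
      = (\prod_(i < n) Pr P (fun w => S i w = s i)) *
        (p%:R^-1) ^+ #|[pred ij : 'I_n * 'I_n | adj ij.1 ij.2]|) ->
  0 < c -> 0 <= theta < 1 ->
  let Sp := fun w (i : 'I_n) =>
    (Sshare p adj (fun j => val (S j w)) (fun j k => val (Rr j k w)) i)%:~R : R in
  let O := fun w =>
    ((fun j : 'I_n => if j \in Vc then Some (S j w) else None),
     (fun j k : 'I_n => if adj j k && ((j \in Vc) || (k \in Vc))
                        then Some (Rr j k w) else None),
     (fun t : nat => xseq adj c theta (Sp w) t)) in
  forall i : 'I_n, i \notin Vc ->
    MI P (S i) O =
    MI P (S i) (fun w => (\sum_(j in honest_component adj Vc i) val (S j w))%N).
Proof.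
case: p S Rr => [|p'] S Rr adj_sym adj_irr conn hcor Ppmf Pbound Pindep c_gt0 th Sp O i hi.
  exfalso.
  case: (pickP (fun _ : T => true)) => [w _|h]; first by case: (S i w).
  have := Ppmf.2; rewrite big1 => [/eqP|w]; last by have := h w.
  by rewrite eq_sym oner_eq0.
exact: (MI_eq theta adj_sym Ppmf Pbound Pindep c_gt0 hi).
Qed.
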